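(* Let $G$ be a $6$-regular graph, $\mathcal S$ a canonical path partition of $G$, and $P$ a path component with end-vertices $o_1,o_2$. Let $x_1,x_2\in V_2$ be path neighbors on $P$, with $x_1$ immediately preceding $x_2$ when $P$ is traversed from $o_1$ to $o_2$. Then it is not the case that both $x_1$ goes to $o_2$ and $x_2$ goes to $o_1$.
   Context: All graphs are finite, simple and undirected. A path partition of $G=(V,E)$ is a set of vertex-disjoint paths (single vertices allowed) covering $V$; its members are components. A component with $t\ge3$ vertices is a cycle component if the subgraph induced on its vertex set has a spanning cycle; a one-vertex component is an isolated vertex; every other component is a path component. A path partition is canonical if (1) it has the minimum number of components among all path partitions of $G$; (2) among those, it has the maximum number of cycle components; (3) it has no isolated vertices. Given a canonical path partition $\mathcal S$ of $G$: two vertices are path neighbors if they are consecutive on a path component. An edge of $G$ is a free edge unless it joins two path neighbors or has both endpoints in the same cycle component. $V_1$ is the set of end-vertices of path components together with all vertices of cycle components. $V_2$ is the set of vertices not in $V_1$ that are joined by a free edge to a vertex of $V_1$. A balanced edge is a free edge with one endpoint in $V_1$ and the other in $V_2$; for $x\in V_2$, $y\in V_1$ we say $x$ goes to $y$ if $xy$ is a balanced edge. *)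

(* Defs.v *)
From mathcomp Require Import all_boot.
Set Implicit Arguments. Unset Strict Implicit. Unset Printing Implicit Defensive.

Section PathPartitions.
Variables (T : finType) (e : rel T).

Definition simple_graph := symmetric e /\ irreflexive e.

Definition regular (d : nat) := forall v : T, #|[set w | e v w]| = d.

Definition gpath (p : seq T) : bool :=
  if p is x :: q then uniq p && path e x q else false.

(* A path partition: a list of vertex-disjoint paths covering V.
   Its components are the members of the list; their number is size S. *)
Definition path_partition (S : seq (seq T)) : Prop :=
  all gpath S /\ uniq (flatten S) /\ forall x : T, x \in flatten S.

(* Cycle component: >= 3 vertices and the induced subgraph on its vertex set
   has a spanning cycle (some ordering of the vertices is an e-cycle). *)
Definition cycle_comp (p : seq T) : bool :=
  (3 <= size p) && has (cycle e) (permutations p).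

Definition isolated_comp (p : seq T) : bool := size p == 1.

Definition path_comp (p : seq T) : bool :=
  ~~ cycle_comp p && ~~ isolated_comp p.

Definition n_cycle_comps (S : seq (seq T)) : nat := count cycle_comp S.

Definition canonical (S : seq (seq T)) : Prop :=
  [/\ path_partition S,
      (forall S', path_partition S' -> size S <= size S'),
      (forall S', path_partition S' -> size S' = size S ->
                  n_cycle_comps S' <= n_cycle_comps S)
    & all (fun p => ~~ isolated_comp p) S].

Variable S : seq (seq T).

Definition path_nbrs (x y : T) : bool :=
  has (fun p => path_comp p && (infix [:: x; y] p || infix [:: y; x] p)) S.

Definition same_cycle_comp (x y : T) : bool :=
  has (fun p => [&& cycle_comp p, x \in p & y \in p]) S.

Definition free_edge (x y : T) : bool :=
  [&& e x y, ~~ path_nbrs x y & ~~ same_cycle_comp x y].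

Definition inV1 (x : T) : bool :=
  has (fun p => path_comp p && ((ohead p == Some x) || (last x p == x) && (x \in p))) S
  || has (fun p => cycle_comp p && (x \in p)) S.

Definition inV2 (x : T) : bool :=
  ~~ inV1 x && [exists y, inV1 y && free_edge x y].

Definition balanced_edge (x y : T) : bool :=
  free_edge x y && ((inV1 x && inV2 y) || (inV2 x && inV1 y)).

Definition goes_to (x y : T) : bool :=
  [&& inV2 x, inV1 y & balanced_edge x y].

End PathPartitions.

(* Main.v *)
Require Import Defs.
From mathcomp Require Import all_boot.

Theorem mainTheorem5 (T : finType) (e : rel T) (S : seq (seq T))
    (P : seq T) (o1 o2 x1 x2 : T) :
  simple_graph e -> regular e 6 ->
  canonical e S ->
  P \in S -> path_comp e P ->
  ohead P = Some o1 -> last o1 P = o2 ->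
  inV2 e S x1 -> inV2 e S x2 ->
  infix [:: x1; x2] P ->
  ~ (goes_to e S x1 o2 && goes_to e S x2 o1).
Proof.
move=> [esym eirr] _ [[allg _] _ _ _] PS Pc hP lP v1 v2 /infixP [A [B defP]].
case/andP=> g1 g2.
have e1 : e x1 o2 by move: g1 => /and3P [_ _ /andP [/and3P [] ]].
have e2 : e x2 o1 by move: g2 => /and3P [_ _ /andP [/and3P [] ]].
have gP : gpath e P by move/allP: allg; apply.
case: A defP => [|a A'] defP.
  move: v1; rewrite /inV2 /inV1 => /andP [/negP H _]; apply: H.
  apply/orP; left; apply/hasP; exists P => //; rewrite Pc defP /=.
  by move: hP; rewrite defP /= => -[->]; rewrite eqxx.
rewrite defP /= in hP; case: hP => ha; subst a.
rewrite defP /= in gP; case/andP: gP => _ pth.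
rewrite defP /= last_cat /= in lP.
move: Pc; rewrite /path_comp => /andP [/negP H _]; apply: H.
rewrite /cycle_comp; apply/andP; split; first by rewrite defP /= size_cat /= !addnS.
apply/hasP; exists (o1 :: A' ++ x1 :: rev (x2 :: B)).
  rewrite mem_permutations defP perm_cons perm_cat2l perm_cons.
  by rewrite perm_rev.
rewrite /= rcons_cat /= cat_path.
move: pth; rewrite cat_path /= => /and4P [-> -> _ pB] /=.
rewrite rcons_path; apply/andP; split; last by rewrite rev_cons last_rcons.
rewrite (lastI x2 B) rev_rcons /= lP e1 /=.
rewrite -lP rev_path.
rewrite (@eq_path _ _ e); first exact: pB. by move=> u v; rewrite esym.
Qed.
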